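(* Let $\lambda,\sigma_1,\sigma_2\in\mathbb{C}^*$ and $\eta_1,\eta_2\in\mathbb{C}$. Let $V$ be the subspace of $\Omega(\lambda,\eta_1,\sigma_1,0)\otimes\Omega(\lambda,\eta_2,0,\sigma_2)$ spanned by $\{\sum_{t=0}^{j}\binom{j}{t}X^iY^{j-t}\otimes S^kT^t\mid i,j,k\in\mathbb{N}\}$, which is a proper subspace. Then $V$ is a minimal proper $\mathcal{G}$-submodule of $\Omega(\lambda,\eta_1,\sigma_1,0)\otimes\Omega(\lambda,\eta_2,0,\sigma_2)$ (i.e. $V$ is a nonzero proper submodule containing no nonzero proper submodule).
   Context: The planar Galilean conformal algebra $\mathcal{G}$ is the complex Lie algebra with basis $\{L_m,H_m,I_m,J_m\mid m\in\mathbb{Z}\}$ and brackets $[L_m,L_n]=(n-m)L_{m+n}$, $[L_m,H_n]=nH_{m+n}$, $[L_m,I_n]=(n-m)I_{m+n}$, $[L_m,J_n]=(n-m)J_{m+n}$, $[H_m,I_n]=I_{m+n}$, $[H_m,J_n]=-J_{m+n}$, and $[H_m,H_n]=[I_m,I_n]=[J_m,J_n]=[I_m,J_n]=0$ for all $m,n\in\mathbb{Z}$. For $\lambda,\sigma\in\mathbb{C}^*$, $\eta\in\mathbb{C}$, the module $\Omega(\lambda,\eta,\sigma,0)$ is $\mathbb{C}[X,Y]$ with $L_m f(X,Y)=\lambda^m(Y-mX+m\eta)f(X,Y-m)$, $H_m f(X,Y)=\lambda^m X f(X,Y-m)$, $I_m f(X,Y)=\lambda^m\sigma f(X-1,Y-m)$,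 $J_m f(X,Y)=0$. The module $\Omega(\lambda,\eta,0,\sigma)$ is $\mathbb{C}[S,T]$ with $L_m f(S,T)=\lambda^m(T+mS+m\eta)f(S,T-m)$, $H_m f(S,T)=\lambda^m S f(S,T-m)$, $I_m f(S,T)=0$, $J_m f(S,T)=\lambda^m\sigma f(S+1,T-m)$. The tensor product of $\mathcal{G}$-modules has action $x(v\otimes w)=xv\otimes w+v\otimes xw$. $\mathbb{N}$ denotes the non-negative integers. *)

(* Defs.v *)
From HB Require Import structures.
From mathcomp Require Import all_boot all_algebra.
From mathcomp Require Import Rstruct.
From mathcomp Require Import complex.
From mathcomp Require Export mpoly.
Set Implicit Arguments. Unset Strict Implicit. Unset Printing Implicit Defensive.
Import GRing.Theory Num.Theory.
Local Open Scope ring_scope.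

Definition CC : Type := complex Rdefinitions.R.

(* The tensor product C[X,Y] (x) C[S,T] is identified with C[X,Y,S,T]
   via f(X,Y) (x) g(S,T) |-> f(X,Y) g(S,T).  Variables: X=0, Y=1, S=2, T=3. *)
Definition Poly4 := {mpoly CC[4]}.
Definition vX : Poly4 := 'X_(inord 0).
Definition vY : Poly4 := 'X_(inord 1).
Definition vS : Poly4 := 'X_(inord 2).
Definition vT : Poly4 := 'X_(inord 3).

Definition subst4 (a b c d : Poly4) (F : Poly4) : Poly4 :=
  F \mPo [tuple a; b; c; d].

Definition cst (c : CC) : Poly4 := c%:MP.
Definition icst (m : int) : Poly4 := (m%:~R : CC)%:MP.

Inductive gca_gen := GL of int | GH of int | GI of int | GJ of int.

(* Action of the basis elements on Omega(lam, eta, sig, 0) = C[X,Y],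
   extended to the first tensor factor (variables X,Y). *)
Definition act_Omega1 (lam eta sig : CC) (x : gca_gen) (F : Poly4) : Poly4 :=
  match x with
  | GL m => lam ^ m *: ((vY - icst m * vX + icst m * cst eta)
                          * subst4 vX (vY - icst m) vS vT F)
  | GH m => lam ^ m *: (vX * subst4 vX (vY - icst m) vS vT F)
  | GI m => (lam ^ m * sig) *: subst4 (vX - 1) (vY - icst m) vS vT F
  | GJ m => 0
  end.

(* Action of the basis elements on Omega(lam, eta, 0, sig) = C[S,T],
   extended to the second tensor factor (variables S,T). *)
Definition act_Omega2 (lam eta sig : CC) (x : gca_gen) (F : Poly4) : Poly4 :=
  match x with
  | GL m => lam ^ m *: ((vT + icst m * vS + icst m * cst eta)
                          * subst4 vX vY vS (vT - icst m) F)
  | GH m => lam ^ m *: (vS * subst4 vX vY vS (vT - icst m) F)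
  | GI m => 0
  | GJ m => (lam ^ m * sig) *: subst4 vX vY (vS + 1) (vT - icst m) F
  end.

Definition act_tensor (lam eta1 sig1 eta2 sig2 : CC) (x : gca_gen) (F : Poly4)
  : Poly4 :=
  act_Omega1 lam eta1 sig1 x F + act_Omega2 lam eta2 sig2 x F.

Definition is_submodule (lam eta1 sig1 eta2 sig2 : CC) (W : Poly4 -> Prop)
  : Prop :=
  [/\ W 0,
      (forall F G, W F -> W G -> W (F + G)),
      (forall (c : CC) F, W F -> W (c *: F)) &
      (forall x F, W F -> W (act_tensor lam eta1 sig1 eta2 sig2 x F))].

Definition vgen (i j k : nat) : Poly4 :=
  \sum_(t < j.+1) ('C(j, t))%:R *:
     (vX ^+ i * vY ^+ (j - t) * vS ^+ k * vT ^+ t).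

Definition inV (F : Poly4) : Prop :=
  exists s : seq (CC * (nat * nat * nat)),
    F = \sum_(p <- s) p.1 *: vgen p.2.1.1 p.2.1.2 p.2.2.

(* Main.v *)
Require Import Defs.
From HB Require Import structures.
From mathcomp Require Import all_boot all_algebra.
From mathcomp Require Import Rstruct complex mpoly.
Import GRing.Theory Num.Theory.

From mathcomp Require Import ring.
From Stdlib Require Import Classical.
Local Open Scope ring_scope.
Lemma size_sub_same (R : nzRingType) (p q : {poly R}) :
  size p = size q -> lead_coef p = lead_coef q -> (0 < size p)%N -> (size (p - q)%R < size p)%N.
Proof.
move=> Es El Hp.
have Hle : (size (p - q)%R <= size p)%N.
  by apply: leq_trans (size_add _ _) _; rewrite size_opp -Es maxnn.
rewrite ltn_neqAle Hle andbT; apply/eqP => E.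
have : lead_coef (p - q) = 0.
  by rewrite /lead_coef E coefB -[p`_ _]/(lead_coef p) El /lead_coef Es subrr.
move/eqP; rewrite lead_coef_eq0 => /eqP E0.
by move: E; rewrite E0 size_poly0 => E1; rewrite -E1 in Hp.
Qed.

Lemma shift_size (R : idomainType) (a : R) (p : {poly R}) :
  p != 0 -> (size (p \Po ('X + a%:P) - p)%R < size p)%N.
Proof.
move=> p0; have E : size (p \Po ('X + a%:P)) = size p.
  by rewrite size_comp_poly2 // size_XaddC.
rewrite -[X in (_ < X)%N]E; apply: size_sub_same => //.
- by rewrite lead_coef_comp ?size_XaddC // lead_coefXaddC expr1n mulr1.
- by rewrite E size_poly_gt0.
Qed.

Lemma shift_neq (R : idomainType) (a : R) (p : {poly R}) :
  a != 0 -> (forall n, (n.+1)%:R != 0 :> R) -> (1 < size p)%N ->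
  p \Po ('X + a%:P) - p != 0.
Proof.
move=> a0 hc sp; rewrite subr_eq0; apply/eqP => E.
have hx : forall x, p.[x + a] = p.[x].
  by move=> x; rewrite -{2}E horner_comp !hornerE.
pose q := p - (p.[0])%:P.
have sq : size q = size p.
  by rewrite /q size_addl // size_opp; apply: leq_ltn_trans (size_polyC_leq1 _) sp.
have q0 : q != 0 by rewrite -size_poly_gt0 sq; apply: ltnW.
have hr : forall n, q.[a *+ n] = 0.
  move=> n; rewrite /q !hornerE; apply/eqP; rewrite subr_eq0; apply/eqP.
  by elim: n => [|n IH]; rewrite ?mulr0n // mulrSr hx.
have ltij : forall i j, (i < j)%N -> a *+ i != a *+ j.
  move=> i j lij; rewrite eq_sym -subr_eq0 -mulrnBr ?(ltnW lij) //.
  rewrite -mulr_natr mulf_neq0 //.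
  have : (0 < j - i)%N by rewrite subn_gt0.
  by case: (j - i)%N => [//|k] _; apply: hc.
have inj : injective (fun i => a *+ i).
  move=> i j /= /eqP E1; apply/eqP; case: (ltngtP i j) => // [l|l].
    by rewrite (negbTE (ltij _ _ l)) in E1.
  by rewrite eq_sym (negbTE (ltij _ _ l)) in E1.
pose rs := [seq a *+ i | i <- iota 0 (size q)].
have hall : all (root q) rs by apply/allP => x /mapP [i _ ->]; exact/eqP/hr.
have hu : uniq rs by rewrite map_inj_uniq ?iota_uniq.
by have := max_poly_roots q0 hall hu; rewrite size_map size_iota ltnn.
Qed.

Notation P1 := {poly CC}.
Notation P2 := {poly P1}.
Notation P3 := {poly P2}.
Notation Sh1 a := (comp_poly ('X + (a : CC)%:P)).
Definition Sh2 (a c : CC) (q : P2) : P2 := (map_poly (Sh1 a) q) \Po ('X + (c%:P)%:P).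
Lemma Sh2_add a c : additive (Sh2 a c).
Proof. by move=> p q; rewrite /Sh2 !rmorphB. Qed.
Lemma Sh2_mul a c : multiplicative (Sh2 a c).
Proof. split=> [p q|]; first by rewrite /Sh2 !rmorphM. by rewrite /Sh2 rmorph1 comp_polyC. Qed.
HB.instance Definition _ a c := GRing.isAdditive.Build P2 P2 (Sh2 a c) (Sh2_add a c).
HB.instance Definition _ a c := GRing.isMultiplicative.Build P2 P2 (Sh2 a c) (Sh2_mul a c).
Definition Sh3 (a c e : CC) (G : P3) : P3 := (map_poly (Sh2 a c) G) \Po ('X + ((e%:P)%:P)%:P).
Lemma Sh3_add a c e : additive (Sh3 a c e).
Proof. by move=> p q; rewrite /Sh3 !rmorphB. Qed.
Lemma Sh3_mul a c e : multiplicative (Sh3 a c e).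
Proof. split=> [p q|]; first by rewrite /Sh3 !rmorphM. by rewrite /Sh3 rmorph1 comp_polyC. Qed.
HB.instance Definition _ a c e := GRing.isAdditive.Build P3 P3 (Sh3 a c e) (Sh3_add a c e).
HB.instance Definition _ a c e := GRing.isMultiplicative.Build P3 P3 (Sh3 a c e) (Sh3_mul a c e).

Lemma cr1 : commr_rmorph (@mpolyC 4 CC) vX. Proof. by move=> a; apply: mulrC. Qed.
Notation psi1 := (horner_morph cr1).
Lemma cr2 : commr_rmorph psi1 vS. Proof. by move=> a; apply: mulrC. Qed.
Notation psi2 := (horner_morph cr2).
Lemma cr3 : commr_rmorph psi2 (vY + vT). Proof. by move=> a; apply: mulrC. Qed.
Notation psi3 := (horner_morph cr3).

Definition x3 : P3 := ('X%:P)%:P.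
Definition s3 : P3 := 'X%:P.
Definition u3 : P3 := 'X.
Definition k3 (c : CC) : P3 := ((c%:P)%:P)%:P.

Lemma k3D a b : k3 (a + b) = k3 a + k3 b.
Proof. by rewrite /k3 !polyCD. Qed.
Lemma k3M a b : k3 (a * b) = k3 a * k3 b.
Proof. by rewrite /k3 !polyCM. Qed.
Lemma k3N a : k3 (- a) = - k3 a.
Proof. by rewrite /k3 !polyCN. Qed.
Lemma k31 : k3 1 = 1. Proof. by rewrite /k3 !polyC1. Qed.
Lemma k30 : k3 0 = 0. Proof. by rewrite /k3 !polyC0. Qed.

Lemma psi3x : psi3 x3 = vX.
Proof. by rewrite /x3 horner_morphC /= horner_morphC /= horner_morphX. Qed.
Lemma psi3s : psi3 s3 = vS.
Proof. by rewrite /s3 horner_morphC /= horner_morphX. Qed.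
Lemma psi3u : psi3 u3 = vY + vT.
Proof. by rewrite /u3 horner_morphX. Qed.
Lemma psi3k c : psi3 (k3 c) = cst c.
Proof. by rewrite /k3 horner_morphC /= horner_morphC /= horner_morphC. Qed.

Lemma Sh1X a : Sh1 a 'X = 'X + a%:P.
Proof. by rewrite comp_polyX. Qed.
Lemma Sh1C a c : Sh1 a c%:P = c%:P.
Proof. by rewrite comp_polyC. Qed.
Lemma Sh3x a c e : Sh3 a c e x3 = x3 + k3 a.
Proof. by rewrite /Sh3 /x3 map_polyC comp_polyC /= /Sh2 map_polyC comp_polyC /= comp_polyX /k3 !polyCD. Qed.
Lemma Sh3s a c e : Sh3 a c e s3 = s3 + k3 c.
Proof. by rewrite /Sh3 /s3 map_polyC comp_polyC /= /Sh2 map_polyX comp_polyX /k3 !polyCD. Qed.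
Lemma Sh3u a c e : Sh3 a c e u3 = u3 + k3 e.
Proof. by rewrite /Sh3 /u3 map_polyX comp_polyX. Qed.
Lemma Sh3k a c e z : Sh3 a c e (k3 z) = k3 z.
Proof. by rewrite /Sh3 /k3 map_polyC comp_polyC /= /Sh2 map_polyC comp_polyC /= Sh1C. Qed.

Lemma poly_ext (R A : nzRingType) (f g : {poly R} -> A) :
  {morph f : x y / x + y} -> {morph f : x y / x * y} ->
  {morph g : x y / x + y} -> {morph g : x y / x * y} ->
  f 'X = g 'X -> (forall c, f c%:P = g c%:P) -> forall p, f p = g p.
Proof.
move=> fD fM gD gM hX hC; elim/poly_ind => [|p c IH]; first by rewrite -polyC0 hC.
by rewrite fD gD fM gM IH hX hC.
Qed.

Lemma ext3 (A : nzRingType) (f g : P3 -> A) :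
  {morph f : x y / x + y} -> {morph f : x y / x * y} ->
  {morph g : x y / x + y} -> {morph g : x y / x * y} ->
  f u3 = g u3 -> f s3 = g s3 -> f x3 = g x3 -> (forall c, f (k3 c) = g (k3 c)) ->
  forall G, f G = g G.
Proof.
move=> fD fM gD gM hu hs hx hk; apply: poly_ext => //.
apply: (@poly_ext _ _ (fun q : P2 => f q%:P) (fun q : P2 => g q%:P)).
- by move=> x y /=; rewrite polyCD fD.
- by move=> x y /=; rewrite polyCM fM.
- by move=> x y /=; rewrite polyCD gD.
- by move=> x y /=; rewrite polyCM gM.
- exact: hs.
apply: (@poly_ext _ _ (fun q : P1 => f q%:P%:P) (fun q : P1 => g q%:P%:P)).
- by move=> x y /=; rewrite !polyCD fD.
- by move=> x y /=; rewrite !polyCM fM.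
- by move=> x y /=; rewrite !polyCD gD.
- by move=> x y /=; rewrite !polyCM gM.
- exact: hx.
exact: hk.
Qed.

Lemma Sh3_0 G : Sh3 0 0 0 G = G.
Proof.
apply: (@ext3 _ (Sh3 0 0 0) id) => //.
- exact: rmorphD. - exact: rmorphM.
- by rewrite Sh3u k30 addr0.
- by rewrite Sh3s k30 addr0.
- by rewrite Sh3x k30 addr0.
- by move=> c; rewrite Sh3k.
Qed.

Lemma Sh3_comp a c e a' c' e' G :
  Sh3 a c e (Sh3 a' c' e' G) = Sh3 (a + a') (c + c') (e + e') G.
Proof.
apply: (@ext3 _ (fun G => Sh3 a c e (Sh3 a' c' e' G)) (Sh3 (a + a') (c + c') (e + e'))).
- by move=> x y; rewrite !rmorphD.
- by move=> x y; rewrite !rmorphM.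
- exact: rmorphD. - exact: rmorphM.
- by rewrite !Sh3u rmorphD /= Sh3u Sh3k k3D addrA.
- by rewrite !Sh3s rmorphD /= Sh3s Sh3k k3D addrA.
- by rewrite !Sh3x rmorphD /= Sh3x Sh3k k3D addrA.
- by move=> z; rewrite !Sh3k.
Qed.


Lemma subst4X a b c d : subst4 a b c d vX = a.
Proof. by rewrite /subst4 /vX comp_mpolyXU inordK. Qed.
Lemma subst4Y a b c d : subst4 a b c d vY = b.
Proof. by rewrite /subst4 /vY comp_mpolyXU inordK. Qed.
Lemma subst4S a b c d : subst4 a b c d vS = c.
Proof. by rewrite /subst4 /vS comp_mpolyXU inordK. Qed.
Lemma subst4T a b c d : subst4 a b c d vT = d.
Proof. by rewrite /subst4 /vT comp_mpolyXU inordK. Qed.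
Lemma subst4D a b c d F G : subst4 a b c d (F + G) = subst4 a b c d F + subst4 a b c d G.
Proof. by rewrite /subst4 rmorphD. Qed.
Lemma subst4M a b c d F G : subst4 a b c d (F * G) = subst4 a b c d F * subst4 a b c d G.
Proof. by rewrite /subst4 rmorphM. Qed.
Lemma subst4C a b c d z : subst4 a b c d (cst z) = cst z.
Proof. by rewrite /subst4 /cst comp_mpolyC. Qed.

Lemma cstD a b : cst (a + b) = cst a + cst b.
Proof. by rewrite /cst rmorphD. Qed.
Lemma cstM a b : cst (a * b) = cst a * cst b.
Proof. by rewrite /cst rmorphM. Qed.
Lemma cstN a : cst (- a) = - cst a.
Proof. by rewrite /cst rmorphN. Qed.
Lemma cst0 : cst 0 = 0.
Proof. by rewrite /cst rmorph0. Qed.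
Lemma cst1 : cst 1 = 1.
Proof. by rewrite /cst rmorph1. Qed.

Definition sub4 a b c d := subst4 (vX + cst a) (vY + cst b) (vS + cst c) (vT + cst d).

Lemma psi3_Sh a b c d G : sub4 a b c d (psi3 G) = psi3 (Sh3 a c (b + d) G).
Proof.
apply: (@ext3 _ (fun G => sub4 a b c d (psi3 G)) (fun G => psi3 (Sh3 a c (b + d) G))).
- by move=> x y; rewrite /sub4 rmorphD /= subst4D.
- by move=> x y; rewrite /sub4 rmorphM /= subst4M.
- by move=> x y; rewrite !rmorphD.
- by move=> x y; rewrite !rmorphM.
- rewrite Sh3u rmorphD /= psi3u psi3k /sub4 subst4D subst4Y subst4T cstD.
  by rewrite addrACA.
- by rewrite Sh3s rmorphD /= psi3s psi3k /sub4 subst4S.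
- by rewrite Sh3x rmorphD /= psi3x psi3k /sub4 subst4X.
- by move=> z; rewrite Sh3k psi3k /sub4 subst4C.
Qed.

Lemma psiZ c H : c *: psi3 H = psi3 (k3 c * H).
Proof. by rewrite rmorphM /= psi3k /cst mul_mpolyC. Qed.


Lemma psiZ' c H : psi3 (k3 c * H) = c *: psi3 H.
Proof. by rewrite psiZ. Qed.


Lemma actI (lam eta1 sig1 eta2 sig2 : CC) m G : act_tensor lam eta1 sig1 eta2 sig2 (GI m) (psi3 G) = psi3 (k3 (lam ^ m * sig1) * Sh3 (-1) 0 (- m%:~R) G).
Proof.
rewrite /act_tensor /= addr0.
have -> : subst4 (vX - 1) (vY - icst m) vS vT = sub4 (-1) (- m%:~R) 0 0.
  by rewrite /sub4 !cstN cst1 cst0 !addr0.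
by rewrite psi3_Sh addr0; apply: psiZ.
Qed.

Lemma actJ (lam eta1 sig1 eta2 sig2 : CC) m G : act_tensor lam eta1 sig1 eta2 sig2 (GJ m) (psi3 G) = psi3 (k3 (lam ^ m * sig2) * Sh3 0 1 (- m%:~R) G).
Proof.
rewrite /act_tensor /= add0r.
have -> : subst4 vX vY (vS + 1) (vT - icst m) = sub4 0 0 1 (- m%:~R).
  by rewrite /sub4 !cstN cst1 cst0 !addr0.
by rewrite psi3_Sh add0r; apply: psiZ.
Qed.

Lemma actH (lam eta1 sig1 eta2 sig2 : CC) m G : act_tensor lam eta1 sig1 eta2 sig2 (GH m) (psi3 G) = psi3 (k3 (lam ^ m) * ((x3 + s3) * Sh3 0 0 (- m%:~R) G)).
Proof.
rewrite /act_tensor /=.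
have -> : subst4 vX (vY - icst m) vS vT = sub4 0 (- m%:~R) 0 0.
  by rewrite /sub4 !cstN cst0 !addr0.
have -> : subst4 vX vY vS (vT - icst m) = sub4 0 0 0 (- m%:~R).
  by rewrite /sub4 !cstN cst0 !addr0.
rewrite !psi3_Sh addr0 add0r psiZ' -scalerDr.
by rewrite [in RHS]rmorphM /= rmorphD /= psi3x psi3s mulrDl.
Qed.

Lemma actL (lam eta1 sig1 eta2 sig2 : CC) m G : act_tensor lam eta1 sig1 eta2 sig2 (GL m) (psi3 G) =
  psi3 (k3 (lam ^ m) * ((u3 - k3 m%:~R * x3 + k3 m%:~R * s3 + k3 (m%:~R * (eta1 + eta2)))
        * Sh3 0 0 (- m%:~R) G)).
Proof.
rewrite /act_tensor /=.
have -> : subst4 vX (vY - icst m) vS vT = sub4 0 (- m%:~R) 0 0.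
  by rewrite /sub4 !cstN cst0 !addr0.
have -> : subst4 vX vY vS (vT - icst m) = sub4 0 0 0 (- m%:~R).
  by rewrite /sub4 !cstN cst0 !addr0.
rewrite !psi3_Sh addr0 add0r psiZ' -scalerDr.
rewrite [in RHS]rmorphM /= [psi3 (_ + _)]rmorphD /= rmorphD /= rmorphB /= !rmorphM /=.
rewrite psi3x psi3s psi3u !psi3k /icst cstM cstD.
set Z := psi3 _. rewrite /cst; congr (_ *: _); ring.
Qed.



Lemma vgenE i j k : vgen i j k = vX ^+ i * vS ^+ k * (vY + vT) ^+ j.
Proof.
rewrite /vgen exprDn mulr_sumr; apply: eq_bigr => t _.
rewrite scaler_nat mulrnAr; congr (_ *+ _); ring.
Qed.

Lemma psi3_mono i j k : psi3 (x3 ^+ i * s3 ^+ k * u3 ^+ j) = vgen i j k.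
Proof. by rewrite !rmorphM /= !rmorphXn /= psi3x psi3s psi3u vgenE. Qed.

Lemma inV0 : inV 0.
Proof. by exists [::]; rewrite big_nil. Qed.

Lemma inVD F G : inV F -> inV G -> inV (F + G).
Proof. by move=> [s ->] [t ->]; exists (s ++ t); rewrite big_cat. Qed.

Lemma inVZ c F : inV F -> inV (c *: F).
Proof.
move=> [s ->]; exists [seq (c * p.1, p.2) | p <- s].
rewrite big_map scaler_sumr; apply: eq_bigr => p _ /=; by rewrite scalerA.
Qed.

Lemma inV_gen i j k : inV (vgen i j k).
Proof. by exists [:: (1, (i, j, k))]; rewrite big_cons big_nil scale1r addr0. Qed.

Lemma inV_mul M F : (forall i j k, inV (vgen i j k * M)) -> inV F -> inV (F * M).
Proof.
move=> hM [s ->]; elim: s => [|p s IH]; first by rewrite big_nil mul0r; exact: inV0.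
by rewrite big_cons mulrDl -scalerAl; apply: inVD => //; apply: inVZ.
Qed.

Lemma inV_cst c : inV (cst c).
Proof.
have -> : cst c = c *: vgen 0 0 0 by rewrite vgenE !expr0 !mulr1 /cst -mul_mpolyC mulr1.
by apply: inVZ; apply: inV_gen.
Qed.

Lemma inV_mulX F : inV F -> inV (F * vX).
Proof.
apply: inV_mul => i j k; have -> : vgen i j k * vX = vgen i.+1 j k.
  by rewrite !vgenE !exprS; ring.
exact: inV_gen.
Qed.
Lemma inV_mulS F : inV F -> inV (F * vS).
Proof.
apply: inV_mul => i j k; have -> : vgen i j k * vS = vgen i j k.+1.
  by rewrite !vgenE !exprS; ring.
exact: inV_gen.
Qed.
Lemma inV_mulU F : inV F -> inV (F * (vY + vT)).
Proof.
apply: inV_mul => i j k; have -> : vgen i j k * (vY + vT) = vgen i j.+1 k.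
  by rewrite !vgenE !exprS; ring.
exact: inV_gen.
Qed.

Lemma inV_psi G : inV (psi3 G).
Proof.
have h1 : forall p : P1, inV (psi1 p).
  elim/poly_ind => [|p c IH]; first by rewrite rmorph0; exact: inV0.
  rewrite rmorphD rmorphM /= horner_morphX horner_morphC.
  by apply: inVD; [apply: inV_mulX | apply: inV_cst].
have h2 : forall q : P2, inV (psi2 q).
  elim/poly_ind => [|q p IH]; first by rewrite rmorph0; exact: inV0.
  rewrite rmorphD rmorphM /= horner_morphX horner_morphC /=.
  by apply: inVD; [apply: inV_mulS | apply: h1].
elim/poly_ind: G => [|G q IH]; first by rewrite rmorph0; exact: inV0.
rewrite rmorphD rmorphM /= horner_morphX horner_morphC /=.
by apply: inVD; [apply: inV_mulU | apply: h2].
Qed.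

Lemma inV_ex F : inV F -> exists G, F = psi3 G.
Proof.
move=> [s ->]; exists (\sum_(p <- s) k3 p.1 * (x3 ^+ p.2.1.1 * s3 ^+ p.2.2 * u3 ^+ p.2.1.2)).
rewrite rmorph_sum; apply: eq_bigr => p _ /=.
by rewrite psiZ' psi3_mono.
Qed.


Lemma subst4Xn a b c d F n : subst4 a b c d (F ^+ n) = (subst4 a b c d F) ^+ n.
Proof. by rewrite /subst4 rmorphXn. Qed.
Lemma subst4Z a b c d z F : subst4 a b c d (z *: F) = z *: subst4 a b c d F.
Proof. by rewrite /subst4 linearZ. Qed.

Lemma notV : ~ inV vY.
Proof.
pose t1 := subst4 0 1 0 (-1). pose t0 := subst4 0 0 0 0.
have hg : forall i j k, t1 (vgen i j k) = t0 (vgen i j k).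
  move=> i j k; rewrite /t1 /t0 vgenE !subst4M !subst4Xn subst4D.
  by rewrite subst4D !subst4X !subst4S !subst4Y !subst4T subrr addr0.
have hV : forall F, inV F -> t1 F = t0 F.
  move=> F [s ->]; elim: s => [|p s IH]; first by rewrite big_nil /t1 /t0 /subst4 !rmorph0.
  by rewrite !big_cons /t1 /t0 !subst4D !subst4Z -/t1 -/t0 hg IH.
move=> /hV; rewrite /t1 /t0 !subst4Y => /eqP; by rewrite oner_eq0.
Qed.

Definition Wp (W : Poly4 -> Prop) (G : P3) := W (psi3 G).



Lemma WK {lam eta1 sig1 eta2 sig2 W} : is_submodule lam eta1 sig1 eta2 sig2 W ->
  forall z G, Wp W G -> Wp W (k3 z * G).
Proof. by case=> h0 hD hZ hA z G; rewrite /Wp psiZ'; apply: hZ. Qed.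

Lemma WKinv {lam eta1 sig1 eta2 sig2 W} : is_submodule lam eta1 sig1 eta2 sig2 W ->
  forall z G, z != 0 -> Wp W (k3 z * G) -> Wp W G.
Proof.
move=> hS z G z0 /(WK hS (z^-1)).
by rewrite mulrA -k3M mulVf // k31 mul1r.
Qed.

Lemma WD {lam eta1 sig1 eta2 sig2 W} : is_submodule lam eta1 sig1 eta2 sig2 W ->
  forall G H, Wp W G -> Wp W H -> Wp W (G + H).
Proof. by case=> h0 hD hZ hA G H; rewrite /Wp rmorphD; apply: hD. Qed.

Lemma WB {lam eta1 sig1 eta2 sig2 W} : is_submodule lam eta1 sig1 eta2 sig2 W ->
  forall G H, Wp W G -> Wp W H -> Wp W (G - H).
Proof.
move=> hS G H hG hH; have -> : G - H = G + k3 (-1) * H by rewrite k3N k31 mulN1r.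
by apply: (WD hS) => //; apply: (WK hS).
Qed.

Lemma WI {lam eta1 sig1 eta2 sig2 W} : is_submodule lam eta1 sig1 eta2 sig2 W ->
  lam != 0 -> sig1 != 0 ->
  forall (m : int) G, Wp W G -> Wp W (Sh3 (-1) 0 (- m%:~R) G).
Proof.
move=> hS l0 s0 m G hG; apply: (WKinv hS (lam ^ m * sig1)).
  by rewrite mulf_neq0 // expfz_neq0.
rewrite /Wp -(actI lam eta1 sig1 eta2 sig2); case: hS => _ _ _ hA; exact: hA.
Qed.

Lemma WJ {lam eta1 sig1 eta2 sig2 W} : is_submodule lam eta1 sig1 eta2 sig2 W ->
  lam != 0 -> sig2 != 0 ->
  forall (m : int) G, Wp W G -> Wp W (Sh3 0 1 (- m%:~R) G).
Proof.
move=> hS l0 s0 m G hG; apply: (WKinv hS (lam ^ m * sig2)).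
  by rewrite mulf_neq0 // expfz_neq0.
rewrite /Wp -(actJ lam eta1 sig1 eta2 sig2); case: hS => _ _ _ hA; exact: hA.
Qed.

Lemma WH {lam eta1 sig1 eta2 sig2 W} : is_submodule lam eta1 sig1 eta2 sig2 W ->
  lam != 0 ->
  forall (m : int) G, Wp W G -> Wp W ((x3 + s3) * Sh3 0 0 (- m%:~R) G).
Proof.
move=> hS l0 m G hG; apply: (WKinv hS (lam ^ m)); first by rewrite expfz_neq0.
rewrite /Wp -(actH lam eta1 sig1 eta2 sig2); case: hS => _ _ _ hA; exact: hA.
Qed.

Lemma WL {lam eta1 sig1 eta2 sig2 W} : is_submodule lam eta1 sig1 eta2 sig2 W ->
  lam != 0 ->
  forall (m : int) G, Wp W G -> Wp W ((u3 - k3 m%:~R * x3 + k3 m%:~R * s3 + k3 (m%:~R * (eta1 + eta2)))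
        * Sh3 0 0 (- m%:~R) G).
Proof.
move=> hS l0 m G hG; apply: (WKinv hS (lam ^ m)); first by rewrite expfz_neq0.
rewrite /Wp -(actL lam eta1 sig1 eta2 sig2); case: hS => _ _ _ hA; exact: hA.
Qed.


Lemma Sh3C1 a c e (p : P1) : Sh3 a c e (p%:P%:P) = ((p \Po ('X + a%:P))%:P)%:P.
Proof. by rewrite /Sh3 map_polyC comp_polyC /= /Sh2 map_polyC comp_polyC /=. Qed.

Lemma Sh3C2 c e (H : P2) : Sh3 0 c e (H%:P) = (H \Po ('X + (c%:P)%:P))%:P.
Proof.
rewrite /Sh3 map_polyC comp_polyC /= /Sh2; congr (_ \Po _)%:P.
by apply: map_poly_id => x _; rewrite polyC0 addr0 comp_polyXr.
Qed.

Lemma Sh3_map a G : Sh3 a 0 0 G = map_poly (Sh2 a 0) G.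
Proof. by rewrite /Sh3 !polyC0 addr0 comp_polyXr. Qed.

Lemma Sh3_mapc a e G : Sh3 a 0 e G = (map_poly (Sh2 a 0) G) \Po ('X + ((e%:P)%:P)%:P).
Proof. by []. Qed.

Lemma Sh2_inv a q : Sh2 (-a) 0 (Sh2 a 0 q) = q.
Proof.
rewrite /Sh2 !polyC0 !addr0 !comp_polyXr -map_poly_comp.
apply: map_poly_id => x _ /=.
by rewrite -comp_polyA comp_polyD comp_polyX comp_polyC polyCN subrK comp_polyXr.
Qed.

Lemma Sh2_inj a : injective (Sh2 a 0).
Proof. by move=> p q E; rewrite -(Sh2_inv a p) E Sh2_inv. Qed.

Lemma stageX lam eta1 sig1 eta2 sig2 W : is_submodule lam eta1 sig1 eta2 sig2 W ->
  lam != 0 -> sig1 != 0 ->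
  forall n (p : P1), (size p <= n)%N -> p != 0 -> Wp W (p%:P%:P) ->
  exists c, c != 0 /\ Wp W (k3 c).
Proof.
move=> hS l0 s0; elim=> [|n IH] p sp p0 hp.
  by move: sp; rewrite leqn0 size_poly_eq0 (negbTE p0).
case: (leqP (size p) 1) => [s1|s2].
  exists p`_0; split.
    by move: p0; rewrite {1}(size1_polyC s1) polyC_eq0.
  by rewrite /k3 -(size1_polyC s1).
pose D := p \Po ('X + (-1)%:P) - p.
apply: (IH D).
- by rewrite -ltnS; apply: leq_trans sp; apply: shift_size.
- apply: shift_neq => //; first by rewrite oppr_eq0 oner_eq0.
  by move=> k; rewrite pnatr_eq0.
have -> : (D%:P)%:P = Sh3 (-1) 0 (- (0 : int)%:~R) (p%:P%:P) - p%:P%:P.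
  by rewrite Sh3C1 /D !polyCB.
by apply: (WB hS) => //; apply: (WI hS).
Qed.

Lemma stageS lam eta1 sig1 eta2 sig2 W : is_submodule lam eta1 sig1 eta2 sig2 W ->
  lam != 0 -> sig1 != 0 -> sig2 != 0 ->
  forall n (H : P2), (size H <= n)%N -> H != 0 -> Wp W (H%:P) ->
  exists p : P1, p != 0 /\ Wp W (p%:P%:P).
Proof.
move=> hS l0 s10 s20; elim=> [|n IH] H sH H0 hH.
  by move: sH; rewrite leqn0 size_poly_eq0 (negbTE H0).
case: (leqP (size H) 1) => [s1|s2].
  exists H`_0; split.
    by move: H0; rewrite {1}(size1_polyC s1) polyC_eq0.
  by rewrite -(size1_polyC s1).
pose D := H \Po ('X + (1%:P)%:P) - H.
apply: (IH D).
- by rewrite -ltnS; apply: leq_trans sH; apply: shift_size.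
- apply: shift_neq => //; first by rewrite polyC_eq0 oner_eq0.
  by move=> k; rewrite -polyC_natr polyC_eq0 pnatr_eq0.
have -> : D%:P = Sh3 0 1 (- (0 : int)%:~R) (H%:P) - H%:P.
  by rewrite Sh3C2 /D !polyCB.
by apply: (WB hS) => //; apply: (WJ hS).
Qed.

Lemma stageU lam eta1 sig1 eta2 sig2 W : is_submodule lam eta1 sig1 eta2 sig2 W ->
  lam != 0 -> sig1 != 0 ->
  forall n (G : P3), (size G <= n)%N -> G != 0 -> Wp W G ->
  exists H : P2, H != 0 /\ Wp W (H%:P).
Proof.
move=> hS l0 s0; elim=> [|n IH] G sG G0 hG.
  by move: sG; rewrite leqn0 size_poly_eq0 (negbTE G0).
case: (leqP (size G) 1) => [s1|s2].
  exists G`_0; split.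
    by move: G0; rewrite {1}(size1_polyC s1) polyC_eq0.
  by rewrite -(size1_polyC s1).
pose G1 := map_poly (Sh2 (-1) 0) G.
have eG1 : size G1 = size G by rewrite (size_map_inj_poly (Sh2_inj (-1))) // rmorph0.
have hG1 : Wp W G1.
  rewrite /G1 -Sh3_map.
  have := WI hS l0 s0 0 G hG; by rewrite mulr0z oppr0.
pose D := G1 \Po ('X + (((-1)%:P)%:P)%:P) - G1.
apply: (IH D).
- by rewrite -ltnS; apply: leq_trans sG; rewrite -eG1; apply: shift_size; rewrite -size_poly_gt0 eG1 (leq_trans _ s2).
- apply: shift_neq; rewrite ?eG1 //; first by rewrite !polyC_eq0 oppr_eq0 oner_eq0.
  by move=> k; rewrite -!polyC_natr !polyC_eq0 pnatr_eq0.
apply: (WB hS) => //.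
have := WI hS l0 s0 1 G hG; by rewrite mulr1z Sh3_mapc.
Qed.


Lemma Sh3D a c e p q : Sh3 a c e (p + q) = Sh3 a c e p + Sh3 a c e q.
Proof. exact: rmorphD. Qed.
Lemma Sh3M a c e p q : Sh3 a c e (p * q) = Sh3 a c e p * Sh3 a c e q.
Proof. exact: rmorphM. Qed.
Lemma Sh3X a c e p n : Sh3 a c e (p ^+ n) = Sh3 a c e p ^+ n.
Proof. exact: rmorphXn. Qed.
Lemma Sh3x1 a : Sh3 (-1) 0 0 (x3 + k3 (a + 1)) = x3 + k3 a.
Proof. rewrite Sh3D Sh3x Sh3k -addrA -k3D; congr (_ + k3 _); by rewrite addrC addrK. Qed.
Lemma Sh3s0 a e : Sh3 a 0 e s3 = s3.
Proof. by rewrite Sh3s k30 addr0. Qed.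
Lemma Sh3u0 a c : Sh3 a c 0 u3 = u3.
Proof. by rewrite Sh3u k30 addr0. Qed.
Lemma Sh3_mono a i k j :
  Sh3 (-1) 0 0 ((x3 + k3 (a + 1)) ^+ i * s3 ^+ k * u3 ^+ j) = (x3 + k3 a) ^+ i * s3 ^+ k * u3 ^+ j.
Proof. rewrite Sh3M Sh3M !Sh3X Sh3x1 Sh3s0 Sh3u0. reflexivity. Qed.

Lemma up_step {lam eta1 sig1 eta2 sig2 W} : is_submodule lam eta1 sig1 eta2 sig2 W ->
  lam != 0 -> sig1 != 0 -> forall F, Wp W F ->
  Wp W (x3 * Sh3 (-1) 0 0 F) /\ Wp W (s3 * Sh3 (-1) 0 0 F).
Proof.
move=> hS l0 s0 F hF.
set K := Sh3 (-1) 0 0 F.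
have hK : Wp W K by have := WI hS l0 s0 0 F hF; rewrite mulr0z oppr0.
have hU : Wp W (u3 * K).
  have := WL hS l0 0 K hK.
  by rewrite mulr0z oppr0 Sh3_0 k30 !mul0r subr0 !addr0.
have hH : Wp W ((x3 + s3) * K).
  by have := WH hS l0 0 K hK; rewrite mulr0z oppr0 Sh3_0.
have hL : Wp W ((u3 - x3 + s3 + k3 (eta1 + eta2)) * K).
  have eK : Sh3 0 0 (- (1 : int)%:~R) (Sh3 (-1) 0 (- (-1 : int)%:~R) F) = K.
    have -> : (- (1 : int)%:~R : CC) = -1 by rewrite mulr1z.
    have -> : (- (-1 : int)%:~R : CC) = 1 by rewrite intrN mulr1z opprK.
    rewrite Sh3_comp.
    have -> : (0 + -1 : CC) = -1 by rewrite add0r.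
    have -> : (0 + 0 : CC) = 0 by rewrite addr0.
    have -> : (-1 + 1 : CC) = 0 by rewrite addNr.
    reflexivity.
  have eQ : u3 - k3 (1 : int)%:~R * x3 + k3 (1 : int)%:~R * s3 + k3 ((1 : int)%:~R * (eta1 + eta2))
            = u3 - x3 + s3 + k3 (eta1 + eta2).
    have -> : ((1 : int)%:~R : CC) = 1 by rewrite mulr1z.
    by rewrite k31 !mul1r.
  have := WL hS l0 1 _ (WI hS l0 s0 (-1) F hF).
  rewrite eK eQ; exact.
have hE : Wp W ((x3 + s3) * K - ((u3 - x3 + s3 + k3 (eta1 + eta2)) * K - u3 * K - k3 (eta1 + eta2) * K)).
  apply: (WB hS) => //; apply: (WB hS) => //; [apply: (WB hS) => // | apply: (WK hS) => //].
have hE' : Wp W ((x3 + s3) * K + ((u3 - x3 + s3 + k3 (eta1 + eta2)) * K - u3 * K - k3 (eta1 + eta2) * K)).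
  apply: (WD hS) => //; apply: (WB hS) => //; [apply: (WB hS) => // | apply: (WK hS) => //].
have two : (2 : CC) != 0 by rewrite pnatr_eq0.
have hk2 : k3 2 = 2 by rewrite /k3 !polyC_natr.
have inv2 : k3 (2^-1) * 2 = 1 by rewrite -hk2 -k3M (mulVf two) k31.
split.
- have := WK hS (2^-1) _ hE.
  have -> : k3 2^-1 * ((x3 + s3) * K - ((u3 - x3 + s3 + k3 (eta1 + eta2)) * K - u3 * K - k3 (eta1 + eta2) * K))
    = (k3 (2^-1) * 2) * (x3 * K) by ring.
  by rewrite inv2 mul1r.
- have := WK hS (2^-1) _ hE'.
  have -> : k3 2^-1 * ((x3 + s3) * K + ((u3 - x3 + s3 + k3 (eta1 + eta2)) * K - u3 * K - k3 (eta1 + eta2) * K))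
    = (k3 (2^-1) * 2) * (s3 * K) by ring.
  by rewrite inv2 mul1r.
Qed.

Lemma claim lam eta1 sig1 eta2 sig2 W : is_submodule lam eta1 sig1 eta2 sig2 W ->
  lam != 0 -> sig1 != 0 -> Wp W 1 ->
  forall i k a j, Wp W ((x3 + k3 a) ^+ i * s3 ^+ k * u3 ^+ j).
Proof.
move=> hS l0 s0 h1.
have hu : forall j, Wp W (u3 ^+ j).
  elim=> [|j IH]; first by rewrite expr0.
  have := WL hS l0 0 _ IH.
  by rewrite mulr0z oppr0 Sh3_0 k30 !mul0r subr0 !addr0 exprS.
elim=> [|i IHi] k; elim: k => [|k IHk] a j.
- rewrite !expr0 !mul1r; exact: hu.
- have [_ h] := up_step hS l0 s0 _ (IHk (a + 1) j).
  rewrite Sh3_mono in h.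
  have -> : (x3 + k3 a) ^+ 0 * s3 ^+ k.+1 * u3 ^+ j = s3 * ((x3 + k3 a) ^+ 0 * s3 ^+ k * u3 ^+ j).
    rewrite [s3 ^+ k.+1]exprS; ring.
  exact: h.
- have [h _] := up_step hS l0 s0 _ (IHi 0 (a + 1) j).
  rewrite Sh3_mono in h.
  have h2 := WK hS a _ (IHi 0 a j).
  have -> : (x3 + k3 a) ^+ i.+1 * s3 ^+ 0 * u3 ^+ j =
     x3 * ((x3 + k3 a) ^+ i * s3 ^+ 0 * u3 ^+ j) + k3 a * ((x3 + k3 a) ^+ i * s3 ^+ 0 * u3 ^+ j).
    rewrite [(x3 + k3 a) ^+ i.+1]exprS; ring.
  exact: WD hS _ _ h h2.
- have [_ h] := up_step hS l0 s0 _ (IHk (a + 1) j).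
  rewrite Sh3_mono in h.
  have -> : (x3 + k3 a) ^+ i.+1 * s3 ^+ k.+1 * u3 ^+ j = s3 * ((x3 + k3 a) ^+ i.+1 * s3 ^+ k * u3 ^+ j).
    rewrite [s3 ^+ k.+1]exprS; ring.
  exact: h.
Qed.


Theorem proposition3p3 (lam sig1 sig2 eta1 eta2 : CC) :
  lam != 0 -> sig1 != 0 -> sig2 != 0 ->
  [/\ is_submodule lam eta1 sig1 eta2 sig2 inV,
      (exists F, inV F /\ F != 0),
      (exists F, ~ inV F) &
      (forall W : Poly4 -> Prop,
          is_submodule lam eta1 sig1 eta2 sig2 W ->
          (forall F, W F -> inV F) ->
          (forall F, W F -> F = 0) \/ (forall F, inV F -> W F))].
Proof.
move=> l0 s10 s20; split.
- split.
  + exact: inV0.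
  + exact: inVD.
  + move=> c F; exact: inVZ.
  + move=> x F /inV_ex [G ->]; case: x => m.
    * rewrite (actL lam eta1 sig1 eta2 sig2); exact: inV_psi.
    * rewrite (actH lam eta1 sig1 eta2 sig2); exact: inV_psi.
    * rewrite (actI lam eta1 sig1 eta2 sig2); exact: inV_psi.
    * rewrite (actJ lam eta1 sig1 eta2 sig2); exact: inV_psi.
- exists 1; split; last exact: oner_neq0.
  have := inV_cst 1; rewrite cst1; exact.
- exists vY; exact: notV.
- move=> W hS hWV.
  case: (classic (exists F, W F /\ F != 0)) => [[F [WF F0]]|N]; last first.
    left => F WF; case: (eqVneq F 0) => // F0; exfalso; apply: N; exists F; split; [exact: WF | exact: F0].
  right.
  have [G eG] := inV_ex _ (hWV F WF).
  have G0 : G != 0.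
    apply/eqP => G0'; move: F0; rewrite eG G0' rmorph0 eqxx; exact.
  have hG : Wp W G by rewrite /Wp -eG.
  have [H [H0 hH]] := @stageU _ _ _ _ _ _ hS l0 s10 _ G (leqnn _) G0 hG.
  have [p [p0 hp]] := @stageS _ _ _ _ _ _ hS l0 s10 s20 _ H (leqnn _) H0 hH.
  have [c [c0 hc]] := @stageX _ _ _ _ _ _ hS l0 s10 _ p (leqnn _) p0 hp.
  have h1 : Wp W 1.
    apply: (WKinv hS c) => //; rewrite mulr1; exact hc.
  have hgen : forall i j k, W (vgen i j k).
    move=> i j k; have := @claim _ _ _ _ _ _ hS l0 s10 h1 i k 0 j.
    have -> : x3 + k3 0 = x3 by rewrite k30 addr0.
    rewrite /Wp psi3_mono; exact.
  case: hS => h0 hD hZ hA.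
  move=> F' [s ->]; elim: s => [|q s IH]; first by rewrite big_nil.
  rewrite big_cons; apply: hD => //; apply: hZ; apply: hgen.
Qed.
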